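(* Let $\mathcal{P}_1,\mathcal{P}_2$ be finite posets with $p_j=|\mathcal{P}_j|$, such that $\mathcal{C}(\mathcal{P}_j)\subset\mathbb{R}^{p_j}$ has $q_j$ extremal rays for $j=1,2$, and suppose $\mathcal{C}(\mathcal{P}_2)$ is simplicial. Then $r$ is a typical ND rank in $\mathcal{C}(\mathcal{P}_1)\otimes\mathcal{C}(\mathcal{P}_2)$ if and only if $\min(p_1,p_2)\le r\le\min(q_1,q_2)$.
   Context: For a finite poset $\mathcal{Q}$, the order cone $\mathcal{C}(\mathcal{Q})$ is the set of $\mathbf{f}\in\mathbb{R}^{\mathcal{Q}}$ with $f_x\ge0$ and $f_x\le f_y$ whenever $x\preceq y$; a cone in $\mathbb{R}^p$ is simplicial if it is the conical hull of $p$ linearly independent vectors. $\mathcal{N}_{\le r}$ is the set of matrices $\sum_{i=1}^r\mathbf{a}_i\mathbf{b}_i^\intercal$ with $\mathbf{a}_i\in\mathcal{C}(\mathcal{P}_1)$, $\mathbf{b}_i\in\mathcal{C}(\mathcal{P}_2)$, and $\mathcal{N}_r=\mathcal{N}_{\le r}\setminus\mathcal{N}_{\le r-1}$. A number $r$ is a typical ND rank if $\mathcal{N}_r$ has non-empty interior in $\mathbb{R}^{p_1\times p_2}$. *)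

(* Defs.v *)
From HB Require Import structures.
From mathcomp Require Import all_boot all_order all_algebra.
From mathcomp Require Import reals.
Set Implicit Arguments. Unset Strict Implicit. Unset Printing Implicit Defensive.
Import Order.TTheory GRing.Theory Num.Theory.
Local Open Scope ring_scope.

Section Defs.
Variable R : realType.

Definition order_cone (d : Order.disp_t) (Q : finPOrderType d) (f : Q -> R) : Prop :=
  (forall x, 0 <= f x) /\ (forall x y : Q, (x <= y)%O -> f x <= f y).

Definition extremal_vec (T : Type) (C : (T -> R) -> Prop) (v : T -> R) : Prop :=
  [/\ C v, exists x, v x != 0 &
      forall u w, C u -> C w -> (forall x, v x = u x + w x) ->
        exists2 t, 0 <= t & forall x, u x = t * v x].

Definition same_ray (T : Type) (u v : T -> R) : Prop :=
  exists2 t, 0 < t & forall x, u x = t * v x.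

Definition num_extremal_rays (T : Type) (C : (T -> R) -> Prop) (q : nat) : Prop :=
  exists v : 'I_q -> T -> R,
    [/\ forall i, extremal_vec C (v i),
        forall i j, same_ray (v i) (v j) -> i = j &
        forall u, extremal_vec C u -> exists i, same_ray u (v i)].

Definition simplicial (T : finType) (C : (T -> R) -> Prop) : Prop :=
  exists v : 'I_#|T| -> T -> R,
    (forall c : 'I_#|T| -> R, (forall x, \sum_i c i * v i x = 0) -> forall i, c i = 0) /\
    (forall f, C f <-> exists2 c : 'I_#|T| -> R, (forall i, 0 <= c i) &
                         forall x, f x = \sum_i c i * v i x).

Definition ND_le (d1 d2 : Order.disp_t) (P1 : finPOrderType d1) (P2 : finPOrderType d2)
    (r : nat) (M : P1 -> P2 -> R) : Prop :=
  exists a : 'I_r -> P1 -> R, exists b : 'I_r -> P2 -> R,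
    [/\ forall i, order_cone (a i), forall i, order_cone (b i) &
        forall x y, M x y = \sum_i a i x * b i y].

Definition ND_eq (d1 d2 : Order.disp_t) (P1 : finPOrderType d1) (P2 : finPOrderType d2)
    (r : nat) (M : P1 -> P2 -> R) : Prop :=
  match r with
  | 0 => @ND_le _ _ P1 P2 0 M
  | s.+1 => @ND_le _ _ P1 P2 s.+1 M /\ ~ @ND_le _ _ P1 P2 s M
  end.

(* A set of matrices in R^{P1 x P2} has non-empty interior (Euclidean topology,
   expressed with entrywise balls). *)
Definition nonempty_interior (T1 T2 : Type) (S : (T1 -> T2 -> R) -> Prop) : Prop :=
  exists M0 : T1 -> T2 -> R, exists2 e : R, 0 < e &
    forall M, (forall x y, `|M x y - M0 x y| < e) -> S M.

Definition typical_ND_rank (d1 d2 : Order.disp_t) (P1 : finPOrderType d1)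
    (P2 : finPOrderType d2) (r : nat) : Prop :=
  @nonempty_interior _ _ (@ND_eq _ _ P1 P2 r).

End Defs.

(* Main.v *)
Require Import Defs.
From HB Require Import structures.
From mathcomp Require Import all_boot all_order all_algebra.
From mathcomp Require Import reals.
From mathcomp Require Import ring lra zify.
From Stdlib Require Import Classical FunctionalExtensionality.
Import Order.TTheory GRing.Theory Num.Theory.
Local Open Scope ring_scope.
Set Implicit Arguments. Unset Strict Implicit. Unset Printing Implicit Defensive.

Lemma eqA_aux (K : comNzRingType) (p m a b u v : K) :
  p * (m * a + u + (m * b + v)) = m * (p * (a + b)) + p * (u + v).
Proof. ring. Qed.

Lemma sum_ge_term' (R : realType) (I : finType) (F : I -> R) i :
  (forall j, 0 <= F j) -> F i <= \sum_j F j.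
Proof.
move=> F0; rewrite (bigD1 i) //= lerDl; apply: sumr_ge0 => j _; exact: F0.
Qed.

Section OC.
Variables (R : realType) (d : Order.disp_t) (P : finPOrderType d).
Notation C := (@order_cone R d P).

Definition ind (U : {set P}) : P -> R := fun x => (x \in U)%:R.
Definition upset (U : {set P}) := forall x y, x \in U -> (x <= y)%O -> y \in U.

Lemma C0 : C (fun _ => 0).
Proof. by split=> // x y _; rewrite lexx. Qed.

Lemma CD f g : C f -> C g -> C (fun x => f x + g x).
Proof.
move=> [f0 fm] [g0 gm]; split=> [x|x y xy]; first by rewrite addr_ge0.
by rewrite lerD ?fm ?gm.
Qed.

Lemma CZ c f : 0 <= c -> C f -> C (fun x => c * f x).
Proof.
move=> c0 [f0 fm]; split=> [x|x y xy]; first by rewrite mulr_ge0.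
by rewrite ler_wpM2l ?fm.
Qed.

Lemma Csum (I : finType) (c : I -> R) (g : I -> P -> R) :
  (forall i, 0 <= c i) -> (forall i, C (g i)) -> C (fun x => \sum_i c i * g i x).
Proof.
move=> c0 Cg; split=> [x|x y xy].
  by apply: sumr_ge0 => i _; rewrite mulr_ge0 //; case: (Cg i).
by apply: ler_sum => i _; rewrite ler_wpM2l //; case: (Cg i) => _ ->.
Qed.

Lemma ind_in (U : {set P}) x : x \in U -> ind U x = 1.
Proof. by rewrite /ind => ->. Qed.
Lemma ind_out (U : {set P}) x : x \notin U -> ind U x = 0.
Proof. by rewrite /ind => /negbTE ->. Qed.

Lemma ind_ge0 U x : 0 <= ind U x.
Proof. by rewrite /ind; case: (x \in U). Qed.

Lemma Cind U : upset U -> C (ind U).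
Proof.
move=> uU; split=> [x|x y xy]; first exact: ind_ge0.
rewrite /ind; case xU: (x \in U); last by case: (y \in U).
by rewrite (uU x y xU xy).
Qed.

Definition supp (f : P -> R) := [set x | f x != 0].

Lemma layer f : C f -> (exists x, f x != 0) ->
  exists m W, [/\ 0 < m, upset W, W != set0, C (fun x => f x - m * ind W x) &
    (#|supp (fun x => (f x - m * ind W x)%R)| < #|supp f|)%N].
Proof.
move=> [f0 fm] [x0 fx0].
set W := [set x | f x != 0].
have x0W : x0 \in W by rewrite inE.
have [xm xmW xmin] := @arg_minP _ R P x0 (fun x => x \in W) f x0W.
have fpos x : x \in W -> 0 < f x by rewrite inE => h; rewrite lt_def h f0.
have uW : upset W.
  move=> x y; rewrite !inE => hx xy; rewrite gt_eqF //.
  by apply: (lt_le_trans _ (fm x y xy)); rewrite lt_def hx f0.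
exists (f xm), W; split.
- exact: fpos.
- exact: uW.
- by apply/set0Pn; exists x0.
- split=> [x|x y xy]; rewrite /ind.
    case xW: (x \in W); first by rewrite mulr1 subr_ge0 xmin.
    by rewrite mulr0 subr0.
  case xW: (x \in W).
    by rewrite (uW x y xW xy) !mulr1 lerD2r fm.
  move: xW; rewrite inE => /negbFE/eqP ->; rewrite mulr0 subr0.
  case yW: (y \in W); first by rewrite mulr1 subr_ge0 xmin.
  by rewrite mulr0 subr0.
- rewrite /supp; apply: proper_card; apply/properP; split.
    apply/subsetP => x; rewrite !inE /ind.
    case xW: (x \in W); first by move: xW; rewrite inE.
    by move: xW; rewrite inE => /negbFE/eqP ->; rewrite mulr0 subrr eqxx.
  exists xm => //; by rewrite inE /ind xmW mulr1 subrr eqxx.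
Qed.


Lemma layer_ind (Q : (P -> R) -> Prop) : Q (fun _ => 0) ->
  (forall f m W, C f -> Q f -> 0 < m -> upset W -> W != set0 ->
     Q (fun x => m * ind W x + f x)) ->
  forall f, C f -> Q f.
Proof.
move=> Q0 QS.
suff H : forall n f, C f -> (#|supp f| <= n)%N -> Q f.
  by move=> f Cf; apply: (H _ f Cf (leqnn _)).
elim=> [|n IH] f Cf.
  rewrite leqn0 cards_eq0 => /eqP s0.
  have -> : f = (fun _ => 0); last exact: Q0.
  apply: functional_extensionality => x; apply/eqP; apply: contraT => fx.
  have : x \in supp f by rewrite inE.
  by rewrite s0 inE.
move=> hn.
case: (pickP (fun x => f x != 0)) => [x fx|f0].
  have [m [W [m0 uW W0 Cr hc]]] := layer Cf (ex_intro _ x fx).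
  have -> : f = (fun x => m * ind W x + (f x - m * ind W x)).
    by apply: functional_extensionality => y; rewrite addrC subrK.
  apply: QS => //; apply: IH => //.
  by rewrite -ltnS (leq_trans hc hn).
have -> : f = (fun _ => 0); last exact: Q0.
by apply: functional_extensionality => y; move: (f0 y) => /negbFE/eqP.
Qed.


Definition incone q (v : 'I_q -> P -> R) (f : P -> R) :=
  exists c : 'I_q -> R, (forall i, 0 <= c i) /\ forall x, f x = \sum_i c i * v i x.

Lemma incone0 q (v : 'I_q -> P -> R) : incone v (fun _ => 0).
Proof. by exists (fun _ => 0); split=> // x; rewrite big1 // => i _; rewrite mul0r. Qed.

Lemma inconeS q (v : 'I_q -> P -> R) f g m : 0 <= m -> incone v f -> incone v g ->
  incone v (fun x => m * g x + f x).
Proof.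
move=> m0 [c [c0 hc]] [e [e0 he]]; exists (fun i => m * e i + c i); split.
  by move=> i; rewrite addr_ge0 ?mulr_ge0.
move=> x; rewrite hc he mulr_sumr -big_split; apply: eq_bigr => i _ /=.
by rewrite mulrDl mulrA.
Qed.

Lemma incone_ray q (v : 'I_q -> P -> R) f i t : 0 <= t ->
  (forall x, f x = t * v i x) -> incone v f.
Proof.
move=> t0 hf; exists (fun j => if j == i then t else 0); split.
  by move=> j; case: (j == i).
move=> x; rewrite hf (bigD1 i) //= eqxx big1 ?addr0 // => j /negbTE ->.
by rewrite mul0r.
Qed.

Lemma split_ind U u w : upset U -> C u -> C w -> (forall x, ind U x = u x + w x) ->
  ~ (exists2 t, 0 <= t & forall x, u x = t * ind U x) ->
  exists A B, [/\ upset A, upset B,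
    (forall x, ind U x = ind A x + ind B x), (#|A| < #|U|)%N & (#|B| < #|U|)%N].
Proof.
move=> uU [u0 um] [w0 wm] hs hno.
have uout x : x \notin U -> u x = 0.
  move=> xU; have := hs x; rewrite ind_out // => h.
  by apply/eqP; rewrite eq_le u0 andbT; have := w0 x; lra.
have ucst x y : x \in U -> (x <= y)%O -> u x = u y.
  move=> xU xy; have yU := uU x y xU xy.
  have := hs x; have := hs y; rewrite !ind_in // => h1 h2.
  have := um x y xy; have := wm x y xy; lra.
case: (pickP (fun x => x \in U)) => [x0 x0U|U0]; last first.
  by case: hno; exists 0 => // x; rewrite mul0r uout //; rewrite U0.
case: (pickP (fun y => (y \in U) && (u y != u x0))) => [y0 /andP [y0U uy0]|hc]; last first.
  case: hno; exists (u x0) => // x; rewrite /ind.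
  case xU: (x \in U); last by rewrite mulr0 uout ?xU.
  by move: (hc x); rewrite xU /= => /negbFE/eqP ->; rewrite mulr1.
set A := [set y in U | u y == u x0]; set B := [set y in U | u y != u x0].
have AU : A \subset U by apply/subsetP => y; rewrite inE => /andP [].
have BU : B \subset U by apply/subsetP => y; rewrite inE => /andP [].
exists A, B; split.
- move=> x y; rewrite !inE => /andP [xU /eqP ux] xy.
  by rewrite (uU x y xU xy) -(ucst x y xU xy) ux eqxx.
- move=> x y; rewrite !inE => /andP [xU ux] xy.
  by rewrite (uU x y xU xy) -(ucst x y xU xy) ux.
- move=> x; rewrite /ind !inE.
  case xU: (x \in U) => /=; last by rewrite addr0.
  by case: (u x == u x0); rewrite /= ?addr0 ?add0r.
- apply: proper_card; apply/properP; split => //; exists y0 => //.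
  by rewrite inE y0U /= (negbTE uy0).
- apply: proper_card; apply/properP; split => //; exists x0 => //.
  by rewrite inE x0U /= eqxx.
Qed.

Lemma not_ext_split U : upset U -> U != set0 -> ~ extremal_vec C (ind U) ->
  exists A B, [/\ upset A, upset B,
    (forall x, ind U x = ind A x + ind B x), (#|A| < #|U|)%N & (#|B| < #|U|)%N].
Proof.
move=> uU U0 hne; apply: NNPP => hno; apply: hne; split.
- exact: Cind.
- by case/set0Pn: U0 => x xU; exists x; rewrite /ind xU oner_eq0.
move=> u w Cu Cw hs; apply: NNPP => hnot; apply: hno.
exact: (split_ind uU Cu Cw hs hnot).
Qed.

Lemma ind_set0 x : ind set0 x = 0.
Proof. by rewrite /ind inE. Qed.

Lemma cone_gen q (v : 'I_q -> P -> R) :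
  (forall u, extremal_vec C u -> exists i, same_ray u (v i)) ->
  forall f, C f -> incone v f.
Proof.
move=> hv.
have hind : forall n U, upset U -> (#|U| <= n)%N -> incone v (ind U).
  elim=> [|n IH] U uU.
    rewrite leqn0 cards_eq0 => /eqP ->.
    have -> : ind set0 = (fun _ => 0) by apply: functional_extensionality => x; exact: ind_set0.
    exact: incone0.
  move=> hn; case: (eqVneq U set0) => [->|U0].
    have -> : ind set0 = (fun _ => 0) by apply: functional_extensionality => x; exact: ind_set0.
    exact: incone0.
  case: (classic (extremal_vec C (ind U))) => [he|hne].
    have [i [t t0 ht]] := hv _ he; exact: (incone_ray (ltW t0) ht).
  have [A [B [uA uB hs cA cB]]] := not_ext_split uU U0 hne.
  have -> : ind U = (fun x => 1 * ind B x + ind A x).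
    by apply: functional_extensionality => x; rewrite hs mul1r addrC.
  apply: inconeS => //; apply: IH => //; rewrite -ltnS; exact: leq_trans hn.
apply: layer_ind; first exact: incone0.
move=> f m W Cf hf m0 uW _; apply: inconeS => //; first exact: ltW.
exact: (hind _ W uW (leqnn _)).
Qed.


Definition up (x : P) : {set P} := [set y | (x <= y)%O].

Lemma upset_up x : upset (up x).
Proof. by move=> y z; rewrite !inE => xy yz; exact: le_trans xy yz. Qed.

Lemma ext_up x : extremal_vec C (ind (up x)).
Proof.
split.
- exact/Cind/upset_up.
- by exists x; rewrite ind_in ?oner_eq0 // inE lexx.
move=> u w [u0 um] [w0 wm] hs; exists (u x) => // y.
case xy: (x <= y)%O.
  rewrite ind_in ?inE // mulr1.
  have := hs x; have := hs y; rewrite !ind_in ?inE ?lexx // => h1 h2.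
  have := um x y xy; have := wm x y xy; lra.
rewrite ind_out ?inE ?xy // mulr0.
have := hs y; rewrite ind_out ?inE ?xy // => h.
have := u0 y; have := w0 y; lra.
Qed.

Lemma ext_scale v c : 0 < c -> extremal_vec C v -> extremal_vec C (fun x => c * v x).
Proof.
move=> c0 [Cv [x vx] hv]; split.
- exact: CZ (ltW c0) Cv.
- by exists x; rewrite mulf_neq0 // gt_eqF.
move=> u w Cu Cw hs.
have hs' : forall x, v x = c^-1 * u x + c^-1 * w x.
  by move=> y; rewrite -mulrDr -hs mulrA mulVf ?mul1r // gt_eqF.
have ci : 0 <= c^-1 by rewrite invr_ge0 ltW.
have [t t0 ht] := hv (fun x => c^-1 * u x) (fun x => c^-1 * w x)
  (CZ ci Cu) (CZ ci Cw) hs'.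
exists t => // y; have := ht y; move/(congr1 (fun z => c * z)).
by rewrite mulVKf ?gt_eqF // => ->; rewrite mulrCA.
Qed.

Lemma ext_ind v : extremal_vec C v -> exists U t,
  [/\ upset U, U != set0, 0 < t, (forall x, v x = t * ind U x) & extremal_vec C (ind U)].
Proof.
move=> ev; have [Cv [x vx] hv] := ev.
have [m [W [m0 uW W0 Cr _]]] := layer Cv (ex_intro _ x vx).
have hs' : forall y, v y = m * ind W y + (v y - m * ind W y).
  by move=> y; rewrite addrC subrK.
have [t t0 ht] := hv (fun x => m * ind W x) _ (CZ (ltW m0) (Cind uW)) Cr hs'.
case/set0Pn: (W0) => w0 w0W.
have tpos : 0 < t.
  rewrite lt_def t0 andbT; apply/eqP => tz.
  by have := ht w0; rewrite tz mul0r ind_in // mulr1 => h; move: m0; rewrite h ltxx.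
have hvx y : v y = (m / t) * ind W y.
  by rewrite mulrAC ht mulrAC divff ?gt_eqF // mul1r.
exists W, (m / t); split => //; first by rewrite divr_gt0.
have -> : ind W = (fun y => (t / m) * v y).
  apply: functional_extensionality => y; rewrite hvx mulrA.
  by rewrite mulrA mulfVK ?gt_eqF // divff ?gt_eqF // mul1r.
by apply: ext_scale => //; rewrite divr_gt0.
Qed.

Lemma ind_ray U V : (exists2 t, 0 < t & forall x, ind U x = t * ind V x) -> U = V.
Proof.
move=> [t t0 ht]; apply/setP => x; have := ht x; rewrite /ind.
case: (x \in U); case: (x \in V) => //=; rewrite ?mulr1n ?mulr0n ?mulr1 ?mulr0 => h.
- by move: (oner_neq0 R); rewrite h eqxx.
- by move: t0; rewrite -h ltxx.
Qed.


Lemma sum_ge_term (I : finType) (F : I -> R) i : (forall j, 0 <= F j) -> F i <= \sum_j F j.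
Proof.
move=> F0; rewrite (bigD1 i) //= lerDl; apply: sumr_ge0 => j _; exact: F0.
Qed.

Definition phi (U : {set P}) (f : P -> R) :=
  \sum_x (if x \in U then 0 else f x) +
  \sum_x \sum_y (if (x <= y)%O && ((x \in U) == (y \in U)) then f y - f x else 0).
Definition ell (f : P -> R) := \sum_x f x.

Lemma phi_lin U a g h : phi U (fun x => a * g x + h x) = a * phi U g + phi U h.
Proof.
rewrite /phi mulrDr addrACA; congr (_ + _).
  rewrite mulr_sumr -big_split; apply: eq_bigr => x _ /=.
  by case: (x \in U); rewrite ?mulr0 ?addr0.
rewrite mulr_sumr -big_split; apply: eq_bigr => x _ /=.
rewrite mulr_sumr -big_split; apply: eq_bigr => y _ /=.
case: ifP => _; rewrite ?mulr0 ?addr0 //; ring.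
Qed.

Lemma ell_lin a g h : ell (fun x => a * g x + h x) = a * ell g + ell h.
Proof. by rewrite /ell mulr_sumr -big_split. Qed.

Lemma phi0 U : phi U (fun _ => 0) = 0.
Proof.
rewrite /phi big1 ?add0r; last by move=> x _; case: (x \in U).
by rewrite big1 // => x _; rewrite big1 // => y _; case: ifP => _ //; rewrite oppr0.
Qed.

Lemma ell0 : ell (fun _ => 0) = 0.
Proof. by rewrite /ell big1. Qed.

Lemma phi_t1 (U : {set P}) f x : C f -> 0 <= (if x \in U then 0 else f x).
Proof. by move=> [f0 _]; case: (x \in U). Qed.

Lemma phi_t2 (U : {set P}) f x y : C f ->
  0 <= (if (x <= y)%O && ((x \in U) == (y \in U)) then f y - f x else 0).
Proof. by move=> [_ fm]; case: ifP => // /andP [xy _]; rewrite subr_ge0 fm. Qed.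

Lemma phi_ge0 U f : C f -> 0 <= phi U f.
Proof.
move=> Cf; rewrite addr_ge0 //; apply: sumr_ge0 => x _; first exact: phi_t1.
by apply: sumr_ge0 => y _; exact: phi_t2.
Qed.

Lemma phi_self U : phi U (ind U) = 0.
Proof.
rewrite /phi big1 ?add0r; last by move=> x _; case xU: (x \in U); rewrite ?ind_out ?xU.
rewrite big1 // => x _; rewrite big1 // => y _.
case: ifP => // /andP [_ /eqP h]; by rewrite /ind h subrr.
Qed.

Lemma phi_ge1 U W : upset U -> extremal_vec C (ind U) -> upset W -> W != set0 ->
  W != U -> 1 <= phi U (ind W).
Proof.
move=> uU eU uW W0 WU; have CW := Cind uW.
case: (pickP (fun x => (x \in W) && (x \notin U))) => [x /andP [xW xU]|hsub].
  rewrite /phi; apply: ler_wpDr.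
    by apply: sumr_ge0 => z _; apply: sumr_ge0 => y _; exact: phi_t2.
  apply: le_trans (sum_ge_term x _); last by move=> j; exact: phi_t1.
  by rewrite (negbTE xU) ind_in.
have WsU : W \subset U.
  by apply/subsetP => x xW; move: (hsub x); rewrite xW /= => /negbFE.
have [x [y [xU xW xy yW]]] : exists x y, [/\ x \in U, x \notin W, (x <= y)%O & y \in W].
  apply: NNPP => hn.
  have uD : upset (U :\: W).
    move=> x y; rewrite !inE => /andP [xW xU] xy; rewrite (uU x y xU xy) andbT.
    by apply/negP => yW; apply: hn; exists x, y; split.
  have [_ _ hext] := eU.
  have hs : forall z, ind U z = ind W z + ind (U :\: W) z.
    move=> z; rewrite /ind !inE; case zW: (z \in W).
      by rewrite (subsetP WsU z zW) /= addr0.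
    by rewrite /= add0r.
  have [t t0 ht] := hext (ind W) (ind (U :\: W)) CW (Cind uD) hs.
  case/set0Pn: W0 => w0 w0W.
  have t1 : t = 1.
    by have := ht w0; rewrite !ind_in ?(subsetP WsU) // mulr1 => <-.
  apply/negP: WU; apply/negPn/eqP; apply: ind_ray; exists 1; first exact: ltr01.
  by move=> z; rewrite -t1 ht.
rewrite /phi; apply: ler_wpDl.
  by apply: sumr_ge0 => z _; exact: phi_t1.
apply: le_trans (sum_ge_term x _); last first.
  by move=> z; apply: sumr_ge0 => y' _; exact: phi_t2.
apply: le_trans (sum_ge_term y _); last by move=> z; exact: phi_t2.
rewrite xy xU (subsetP WsU y yW) /= ind_in // ind_out // subr0 lexx //.
Qed.


Lemma ell_ind W : ell (ind W) <= #|P|%:R.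
Proof.
rewrite /ell; apply: le_trans (_ : \sum_(x : P) (1 : R) <= _).
  by apply: ler_sum => x _; rewrite /ind; case: (x \in W).
by rewrite sumr_const.
Qed.

Lemma KI U V : upset U -> upset V -> extremal_vec C (ind U) -> extremal_vec C (ind V) ->
  U != V -> forall h, C h -> ell h <= #|P|%:R * (phi U h + phi V h).
Proof.
move=> uU uV eU eV UV; apply: layer_ind.
  by rewrite ell0 !phi0 addr0 mulr0.
move=> f m W Cf IH m0 uW W0.
rewrite ell_lin !phi_lin.
have hs : 1 <= phi U (ind W) + phi V (ind W).
  have gU := phi_ge0 U (Cind uW); have gV := phi_ge0 V (Cind uW).
  case: (eqVneq W U) => [WU|WU].
    have : W != V by rewrite WU.
    by move/(phi_ge1 uV eV uW W0) => h; apply: ler_wpDl.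
  by have := phi_ge1 uU eU uW W0 WU => h; apply: ler_wpDr.
have he := ell_ind W.
have p0 : 0 <= (#|P|%:R : R) by rewrite ler0n.
set a := phi U (ind W) in hs *; set b := phi V (ind W) in hs *.
set p := (#|P|%:R : R) in he p0 *.
have e1 : ell (ind W) <= p * (a + b).
  apply: le_trans he _; rewrite -{1}[p]mulr1; exact: (ler_wpM2l p0 hs).
rewrite eqA_aux.
apply: lerD => //; exact: (ler_wpM2l (ltW m0) e1).
Qed.

Lemma phi_bound U g b : upset U -> 0 <= b -> (forall x, `|g x| <= b) ->
  (forall x y, `|g y - g x| <= b) ->
  phi U (fun x => ind U x + g x) <= (#|P| + #|P| * #|P|)%:R * b.
Proof.
move=> uU b0 hg hg2.
have -> : (fun x => ind U x + g x) = (fun x => 1 * ind U x + g x).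
  by apply: functional_extensionality => x; rewrite mul1r.
rewrite phi_lin phi_self mulr0 add0r.
apply: (@le_trans _ _ (\sum_(x : P) b + \sum_(x : P) \sum_(y : P) b)).
  apply: lerD; apply: ler_sum => x _; last apply: ler_sum => y _.
  - by case: (x \in U) => //; exact: le_trans (ler_norm _) (hg x).
  - by case: ifP => _ //; exact: le_trans (ler_norm _) (hg2 x y).
by rewrite !sumr_const mulr_natl mulrnDr mulrnA.
Qed.


Definition pv (i : 'I_#|P|) : P -> R := ind (up (enum_val i)).

Lemma pv_indep (c : 'I_#|P| -> R) : (forall x, \sum_i c i * pv i x = 0) -> forall i, c i = 0.
Proof.
move=> hc; case: (pickP (fun i => c i != 0)) => [i0 ci0|h] i; last by apply/eqP; move: (h i) => /negbFE.
exfalso.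
pose dn (i : 'I_#|P|) := #|[set z : P | (z <= enum_val i)%O]|.
have [im imS imin] := @arg_minnP _ i0 (fun i => c i != 0) dn ci0.
move: imS; apply/negP; rewrite negbK; apply/eqP.
have := hc (enum_val im); rewrite (bigD1 im) //= big1 ?addr0.
  by rewrite /pv ind_in ?mulr1 // inE lexx.
move=> j jim; case: (eqVneq (c j) 0) => [->|cj]; first by rewrite mul0r.
rewrite /pv ind_out ?mulr0 // inE; apply/negP => hle.
have := imin j cj; rewrite leqNgt => /negP; apply.
rewrite /dn; apply: proper_card; apply/properP; split.
  by apply/subsetP => z; rewrite !inE => hz; exact: le_trans hz hle.
exists (enum_val im); first by rewrite inE.
rewrite inE; apply/negP => hge.
by move: jim; rewrite (enum_val_inj (le_anti (introT andP (conj hle hge)))) eqxx.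
Qed.

Lemma lin_sum (L : (P -> R) -> R) (I : Type) (s : seq I) (c : I -> R) (g : I -> P -> R) :
  L (fun _ => 0) = 0 -> (forall a g h, L (fun x => a * g x + h x) = a * L g + L h) ->
  L (fun x => \sum_(i <- s) c i * g i x) = \sum_(i <- s) c i * L (g i).
Proof.
move=> L0 Ll; elim: s => [|a s IH].
  rewrite big_nil -L0; congr L; apply: functional_extensionality => x; by rewrite big_nil.
rewrite big_cons -IH -Ll; congr L; apply: functional_extensionality => x; by rewrite big_cons.
Qed.

Lemma incone_sum q (v : 'I_q -> P -> R) (I : Type) (s : seq I) (c : I -> R) (g : I -> P -> R) :
  (forall i, 0 <= c i) -> (forall i, incone v (g i)) ->
  incone v (fun x => \sum_(i <- s) c i * g i x).
Proof.
move=> c0 hg; elim: s => [|a s IH].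
  have -> : (fun x => \sum_(i <- [::]) c i * g i x) = (fun _ => 0).
    by apply: functional_extensionality => x; rewrite big_nil.
  exact: incone0.
have -> : (fun x => \sum_(i <- a :: s) c i * g i x) =
          (fun x => c a * g a x + \sum_(i <- s) c i * g i x).
  by apply: functional_extensionality => x; rewrite big_cons.
exact: inconeS.
Qed.

End OC.

Lemma pick_term (R : realType) (I : finType) (c A B : I -> R) (e : R) :
  (forall i, 0 <= c i) -> (forall i, 0 <= A i) -> (forall i, 0 <= B i) ->
  \sum_i c i * A i <= e * \sum_i c i * B i -> 0 < \sum_i c i * B i ->
  exists i, 0 < B i /\ A i <= e * B i.
Proof.
move=> c0 A0 B0 hle hpos; apply: NNPP => hno.
have hgt i : 0 < B i -> e * B i < A i.
  move=> Bi; rewrite ltNge; apply/negP => h; apply: hno; by exists i.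
case: (pickP (fun i => 0 < c i * B i)) => [i0 pi0|hn]; last first.
  have h0 : \sum_i c i * B i <= \sum_(i : I) (0 : R).
    by apply: ler_sum => i _; move: (hn i) => /negbT; rewrite -leNgt.
  by move: hpos; rewrite big1_eq in h0; rewrite ltNge h0.
have tge i : 0 <= c i * (A i - e * B i).
  rewrite mulr_ge0 //; have := B0 i; rewrite le_eqVlt => /orP [/eqP <-|Bi].
    by rewrite mulr0 subr0.
  by rewrite subr_ge0 ltW // hgt.
have : \sum_i c i * (A i - e * B i) <= 0.
  rewrite (eq_bigr (fun i => c i * A i - e * (c i * B i))); last first.
    by move=> i _; rewrite mulrBr mulrCA.
  by rewrite sumrB -mulr_sumr subr_le0.
rewrite leNgt => /negP; apply.
have Bi0 : 0 < B i0.
  by rewrite lt_def (B0 i0) andbT; apply/eqP => h; move: pi0; rewrite h mulr0 ltxx.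
have ci0 : 0 < c i0.
  by rewrite lt_def (c0 i0) andbT; apply/eqP => h; move: pi0; rewrite h mul0r ltxx.
rewrite (bigD1 i0) //=; apply: ltr_wpDr.
  by apply: sumr_ge0 => i _; exact: tge.
by rewrite mulr_gt0 // subr_gt0 hgt.
Qed.

Lemma pigeon r s (f : 'I_r -> 'I_s) : (s < r)%N -> exists j0 j1, j0 != j1 /\ f j0 = f j1.
Proof.
move=> sr; apply: NNPP => hno.
have finj : injective f.
  move=> a b h; apply: NNPP => hab; apply: hno; exists a, b; split => //.
  by apply/eqP.
by have := leq_card f finj; rewrite !card_ord leqNgt sr.
Qed.

Section Ray.
Variables (R : realType) (T : Type).
Lemma same_ray_sym (u v : T -> R) : same_ray u v -> same_ray v u.
Proof.
move=> [t t0 h]; exists t^-1; first by rewrite invr_gt0.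
by move=> x; rewrite h mulrA mulVf ?mul1r // gt_eqF.
Qed.
Lemma same_ray_trans (u v w : T -> R) : same_ray u v -> same_ray v w -> same_ray u w.
Proof.
move=> [t t0 h] [s s0 h']; exists (t * s); first by rewrite mulr_gt0.
by move=> x; rewrite h h' mulrA.
Qed.
End Ray.

Section Coef.
Variables (R : realType) (T : finType).

Lemma coef_uniq (u : 'I_#|T| -> T -> R) :
  (forall c : 'I_#|T| -> R, (forall x, \sum_i c i * u i x = 0) -> forall i, c i = 0) ->
  forall c c' : 'I_#|T| -> R, (forall x, \sum_i c i * u i x = \sum_i c' i * u i x) ->
  forall i, c i = c' i.
Proof.
move=> hind c c' h i; apply/eqP; rewrite -subr_eq0; apply/eqP.
apply: (hind (fun i => c i - c' i)) => x.
have -> : \sum_i (c i - c' i) * u i x = \sum_i c i * u i x - \sum_i c' i * u i x.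
  by rewrite -sumrB; apply: eq_bigr => j _; rewrite mulrBl.
by rewrite h subrr.
Qed.

Lemma coef_exists (u : 'I_#|T| -> T -> R) :
  (forall c : 'I_#|T| -> R, (forall x, \sum_i c i * u i x = 0) -> forall i, c i = 0) ->
  exists coef : (T -> R) -> 'I_#|T| -> R, exists K : R,
    [/\ 0 <= K, (forall f x, f x = \sum_i coef f i * u i x) &
       (forall f b, (forall x, `|f x| <= b) -> forall i, `|coef f i| <= K * b)].
Proof.
move=> hind.
pose U : 'M[R]_#|T| := \matrix_(i, j) u i (enum_val j).
have Uu : U \in unitmx.
  rewrite -row_free_unit; apply: inj_row_free => v hv; apply/rowP => i.
  rewrite mxE; apply: (hind (fun i => v 0 i)) => x.
  have := congr1 (fun M : 'M_(1, #|T|) => M 0 (enum_rank x)) hv.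
  by rewrite /= !mxE => h; rewrite -[X in _ = X]h; apply: eq_bigr => k _; rewrite /U mxE enum_rankK.
pose V := invmx U.
pose coef := fun (f : T -> R) (i : 'I_#|T|) => \sum_(j < #|T|) f (enum_val j) * V j i. exists coef.
exists (\sum_i \sum_j `|V j i|); split.
- by apply: sumr_ge0 => i _; apply: sumr_ge0 => j _.
- move=> f x; pose F : 'rV[R]_#|T| := \row_j f (enum_val j).
  have := congr1 (fun M : 'M_(1, #|T|) => M 0 (enum_rank x)) (mulmxKV Uu F).
  rewrite /= !mxE enum_rankK => <-; apply: eq_bigr => i _.
  rewrite !mxE enum_rankK; congr (_ * _); apply: eq_bigr => j _; by rewrite mxE.
- move=> f b hb i.
  have b0 : 0 <= b.
    exact: le_trans (normr_ge0 _) (hb (enum_val i)).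
  apply: le_trans (ler_norm_sum _ _ _) _.
  apply: (@le_trans _ _ (\sum_j b * `|V j i|)).
    apply: ler_sum => j _; rewrite normrM; apply: ler_wpM2r => //.
  rewrite -mulr_sumr mulrC ler_wpM2r //.
  apply: (@sum_ge_term' R _ (fun i => \sum_j `|V j i|) i) => k.
  by apply: sumr_ge0 => j _.
Qed.
End Coef.

Section SEL.
Variables (R : realType) (d : Order.disp_t) (P : finPOrderType d).
Notation C := (@order_cone R d P).

Lemma rays_sets q : num_extremal_rays C q ->
  exists W : 'I_q -> {set P}, exists pidx : P -> 'I_q,
  [/\ forall i, upset (W i), forall i, extremal_vec C (ind R (W i)), injective W,
      forall x, W (pidx x) = up x & injective pidx].
Proof.
move=> [v [vext vinj vall]].
have : forall i, exists U, upset U /\ extremal_vec C (ind R U) /\ same_ray (v i) (ind R U).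
  move=> i; have [U [t [uU _ t0 ht eU]]] := ext_ind (vext i).
  by exists U; split => //; split => //; exists t.
case/fin_all_exists => W hW.
have Winj : injective W.
  move=> i j hij; apply: vinj.
  have [_ [_ ri]] := hW i; have [_ [_ rj]] := hW j.
  by apply: same_ray_trans ri _; rewrite hij; exact: same_ray_sym.
have : forall x, exists i, W i = up x.
  move=> x; have [i ri] := vall _ (ext_up R x); exists i.
  have [_ [_ rw]] := hW i.
  by apply/esym/ind_ray; exact: same_ray_trans ri rw.
case/fin_all_exists => pidx hp.
exists W, pidx; split.
- by move=> i; case: (hW i).
- by move=> i; case: (hW i) => _ [].
- exact: Winj.
- exact: hp.
move=> x y hxy; have := hp x; rewrite hxy hp => hup.
apply: le_anti; apply/andP; split.
  have : y \in up y by rewrite inE lexx.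
  by rewrite hup inE.
have : x \in up x by rewrite inE lexx.
by rewrite -hup inE.
Qed.

Lemma card_le_q q : num_extremal_rays C q -> (#|P| <= q)%N.
Proof.
move=> hq; have [W [pidx [_ _ _ _ pinj]]] := rays_sets hq.
by have := leq_card pidx pinj; rewrite card_ord.
Qed.

Lemma SEL q r : num_extremal_rays C q -> (r <= q)%N ->
  exists U : 'I_r -> {set P}, [/\ forall i, upset (U i),
    forall i, extremal_vec C (ind R (U i)), injective U &
    forall (i : 'I_r) (k : 'I_#|P|), val i = val k -> U i = up (enum_val k)].
Proof.
move=> hq hrq; have [W [pidx [uW eW Winj hp pinj]]] := rays_sets hq.
pose s1 := [seq pidx (enum_val k) | k <- enum 'I_#|P|].
pose s2 := [seq i <- enum 'I_q | i \notin s1].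
pose sq := s1 ++ s2.
have usq : uniq sq.
  rewrite cat_uniq; apply/and3P; split.
  - rewrite map_inj_uniq ?enum_uniq // => a b /pinj; exact: enum_val_inj.
  - by apply/hasPn => i; rewrite mem_filter => /andP [].
  - exact/filter_uniq/enum_uniq.
have ssq : size sq = q.
  move/card_uniqP: usq => <-; rewrite -[RHS](card_ord q); apply: eq_card => i.
  rewrite mem_cat; case: (boolP (i \in s1)) => //= h.
  by rewrite mem_filter h mem_enum.
pose U (i : 'I_r) := W (nth (widen_ord hrq i) sq i).
have ilt (i : 'I_r) : (i < size sq)%N by rewrite ssq (leq_trans (ltn_ord i) hrq).
exists U; split.
- by move=> i; exact: uW.
- by move=> i; exact: eW.
- move=> i j /Winj h; apply/val_inj/eqP.
  rewrite -(nth_uniq (widen_ord hrq i) (ilt i) (ilt j) usq) h.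
  by rewrite (set_nth_default (widen_ord hrq i) _ (ilt j)).
- move=> i k hik; rewrite /U nth_cat size_map size_enum_ord hik ltn_ord.
  rewrite (nth_map k); last by rewrite size_enum_ord ltn_ord.
  have -> : nth k (enum 'I_#|P|) k = k by apply: val_inj; rewrite /= nth_enum_ord.
  by rewrite hp.
Qed.

End SEL.

Section ND.
Variables (R : realType) (d1 d2 : Order.disp_t) (P1 : finPOrderType d1) (P2 : finPOrderType d2).
Notation C1 := (@order_cone R d1 P1).
Notation C2 := (@order_cone R d2 P2).

Lemma ND_le_mono r s (M : P1 -> P2 -> R) : (r <= s)%N -> ND_le r M -> ND_le s M.
Proof.
move=> rs [a [b [Ca Cb hM]]].
pose a' (i : 'I_s) := if insub (val i) : option 'I_r is Some j then a j else (fun _ => 0).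
pose b' (i : 'I_s) := if insub (val i) : option 'I_r is Some j then b j else (fun _ => 0).
exists a', b'; split.
- by move=> i; rewrite /a'; case: insub => [j|]; [exact: Ca | exact: C0].
- by move=> i; rewrite /b'; case: insub => [j|]; [exact: Cb | exact: C0].
move=> x y; rewrite hM.
pose G (n : nat) := if insub n : option 'I_r is Some j then a j x * b j y else 0.
transitivity (\sum_(i < r) G i).
  by apply: eq_bigr => i _; rewrite /G valK.
rewrite (big_ord_widen s G rs) big_mkcond; apply: eq_bigr => i _.
rewrite /G /a' /b'; case: ifP => h.
  by case: insub => [j|] //=; rewrite mul0r.
by rewrite insubN ?h // mul0r.
Qed.

Lemma ND_le_ge0 r (M : P1 -> P2 -> R) : ND_le r M -> forall x y, 0 <= M x y.
Proof.
move=> [a [b [Ca Cb hM]]] x y; rewrite hM; apply: sumr_ge0 => i _.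
by rewrite mulr_ge0 //; [case: (Ca i) | case: (Cb i)].
Qed.

Lemma ND_le_q1 q r (M : P1 -> P2 -> R) : num_extremal_rays C1 q -> ND_le r M -> ND_le q M.
Proof.
move=> hq [a [b [Ca Cb hM]]].
have [v [vext _ vall]] := hq.
have : forall i, incone (v) (a i) by move=> i; exact: (cone_gen vall (Ca i)).
case/fin_all_exists => c hc.
exists v, (fun k y => \sum_i c i k * b i y); split.
- by move=> k; case: (vext k).
- move=> k; apply: Csum => i; [by case: (hc i) | exact: Cb].
move=> x y; rewrite hM.
transitivity (\sum_i \sum_k c i k * v k x * b i y).
  apply: eq_bigr => i _; case: (hc i) => _ h; rewrite h mulr_suml.
  by apply: eq_bigr.
rewrite exchange_big; apply: eq_bigr => k _; rewrite mulr_sumr; apply: eq_bigr => i _.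
by rewrite mulrA (mulrC (v k x)).
Qed.

End ND.

Lemma ND_le_T (R : realType) (d1 d2 : Order.disp_t) (P1 : finPOrderType d1)
  (P2 : finPOrderType d2) r (M : P1 -> P2 -> R) :
  ND_le r M -> ND_le r (fun y x => M x y).
Proof.
move=> [a [b [Ca Cb hM]]]; exists b, a; split => // y x.
by rewrite hM; apply: eq_bigr => i _; rewrite mulrC.
Qed.

Section Rank.
Variables (R : realType) (d1 d2 : Order.disp_t) (P1 : finPOrderType d1) (P2 : finPOrderType d2).

Definition mxof (M : P1 -> P2 -> R) : 'M[R]_(#|P1|, #|P2|) :=
  \matrix_(i, j) M (enum_val i) (enum_val j).

Lemma rank_le r (M : P1 -> P2 -> R) : ND_le r M -> (\rank (mxof M) <= r)%N.
Proof.
move=> [a [b [Ca Cb hM]]].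
pose A : 'M[R]_(#|P1|, r) := \matrix_(i, k) a k (enum_val i).
pose B : 'M[R]_(r, #|P2|) := \matrix_(k, j) b k (enum_val j).
have -> : mxof M = A *m B.
  apply/matrixP => i j; rewrite !mxE hM; apply: eq_bigr => k _; by rewrite !mxE.
exact: leq_trans (mxrankM_maxr _ _) (rank_leq_row _).
Qed.

Lemma full_rank_near (M0 : P1 -> P2 -> R) e : 0 < e ->
  exists M, (forall x y, `|M x y - M0 x y| < e) /\
            (minn #|P1| #|P2| <= \rank (mxof M))%N.
Proof.
move=> e0; set k := minn #|P1| #|P2|.
pose A0 := mxof M0.
pose L : 'M[R]_(k, #|P1|) := pid_mx k.
pose Rr : 'M[R]_(#|P2|, k) := pid_mx k.
pose B0 := L *m A0 *m Rr.
pose ts := [seq e / (n.+2)%:R | n <- iota 0 k.+1].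
have : ~~ all (fun t => root (char_poly B0) (- t)) ts.
  apply/negP => hall.
  have := @max_poly_roots _ (char_poly B0) [seq - t | t <- ts]
    (monic_neq0 (char_poly_monic B0)).
  rewrite all_map; move/(_ hall).
  rewrite map_inj_uniq; last exact: oppr_inj.
  rewrite map_inj_uniq ?iota_uniq; last first.
    move=> a b /(mulfI (negbT (gt_eqF e0)))/invr_inj/eqP; rewrite eqr_nat => /eqP [].
    done.
  by rewrite !size_map size_iota size_char_poly ltnn => /(_ isT).
case/allPn => t /mapP [n _ ->] hroot.
set t' := e / (n.+2)%:R.
have t0 : 0 < t' by rewrite divr_gt0 // ltr0n.
have te : t' < e.
  rewrite /t' ltr_pdivrMr ?ltr0n // ltr_pMr // ltr1n //.
pose M x y := M0 x y + t' * (pid_mx k : 'M[R]_(#|P1|, #|P2|)) (enum_rank x) (enum_rank y).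
exists M; split.
  move=> x y; rewrite /M addrC addKr normrM (gtr0_norm t0).
  apply: (le_lt_trans _ te); rewrite -[leRHS]mulr1; apply: ler_wpM2l; first exact: ltW.
  by rewrite mxE; case: (_ && _); rewrite ?normr1 ?normr0.
have hA : mxof M = A0 + t' *: pid_mx k.
  by apply/matrixP => i j; rewrite !mxE /M mxE !enum_valK.
have hB : L *m mxof M *m Rr = B0 + t'%:M.
  rewrite hA mulmxDr mulmxDl -scalemxAr -scalemxAl /L /Rr !mul_pid_mx.
  have k1 : minn #|P1| k = k by apply/minn_idPr; rewrite geq_minl.
  have k2 : minn #|P2| k = k by apply/minn_idPr; rewrite geq_minr.
  rewrite !minnn k1 minnn k2.
  by rewrite pid_mx_1 scalemx1.
have hu : B0 + t'%:M \in unitmx.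
  rewrite unitmxE unitfE; apply/negP => /det0P [v v0 hv].
  move: hroot; rewrite -eigenvalue_root_char => /negP; apply.
  apply/eigenvalueP; exists v => //.
  move: hv; rewrite mulmxDr mul_mx_scalar => /eqP; rewrite addr_eq0 => /eqP ->.
  by rewrite scaleNr.
have := mxrank_unit hu; rewrite -hB => hk.
rewrite -[X in (X <= _)%N]hk.
exact: leq_trans (mxrankM_maxl _ _) (mxrankM_maxr _ _).
Qed.

End Rank.

Section Simp.
Variables (R : realType) (T : finType) (C : (T -> R) -> Prop).

Lemma simp_q q : simplicial C -> num_extremal_rays C q -> (q <= #|T|)%N.
Proof.
move=> [u [uind uC]] [v [vext vinj _]].
have hu0 k : exists x, u k x != 0.
  apply: NNPP => h.
  have hz : forall x, \sum_j (if j == k then 1 else 0) * u j x = 0.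
    move=> x; rewrite (bigD1 k) //= big1 ?addr0.
      rewrite eqxx mul1r; apply/eqP; apply: NNPP => hx; apply: h; by exists x; apply/negP.
    by move=> j /negbTE ->; rewrite mul0r.
  by have := uind _ hz k; rewrite eqxx => /eqP; rewrite oner_eq0.
have : forall i, exists k, same_ray (v i) (u k).
  move=> i; have [Cv [x vx] hv] := vext i.
  have [c c0 hc] := (uC (v i)).1 Cv.
  have [k ck] : exists k, c k != 0.
    apply: NNPP => h; move: vx; rewrite hc big1 ?eqxx // => k _.
    suff -> : c k = 0 by rewrite mul0r.
    by apply: NNPP => hk; apply: h; exists k; apply/eqP.
  have Cuk : C (fun x => c k * u k x).
    apply/uC; exists (fun j => if j == k then c k else 0).
      by move=> j; case: (j == k).
    move=> y; rewrite (bigD1 k) //= eqxx big1 ?addr0 // => j /negbTE ->.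
    by rewrite mul0r.
  have Crest : C (fun x => v i x - c k * u k x).
    apply/uC; exists (fun j => if j == k then 0 else c j).
      by move=> j; case: (j == k).
    move=> y; rewrite hc (bigD1 k) //= [in RHS](bigD1 k) //= eqxx mul0r add0r.
    rewrite addrC addrK; apply: eq_bigr => j /negbTE -> //.
  have hs : forall x, v i x = c k * u k x + (v i x - c k * u k x).
    by move=> y; rewrite addrC subrK.
  have [t t0 ht] := hv _ _ Cuk Crest hs.
  have ck0 : 0 < c k by rewrite lt_def ck c0.
  have tn0 : t != 0.
    apply/eqP => tz; have [y uy] := hu0 k.
    by move: (ht y); rewrite tz mul0r => /eqP; rewrite mulf_eq0 (negbTE ck) (negbTE uy).
  have tp : 0 < t by rewrite lt_def tn0 t0.
  exists k; exists (c k / t); first by rewrite divr_gt0.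
  by move=> y; rewrite mulrAC ht mulrAC mulfV // mul1r.
case/fin_all_exists => f hf.
have finj : injective f.
  move=> i j hij; apply: vinj; apply: same_ray_trans (hf i) _.
  rewrite hij; exact: same_ray_sym.
by have := leq_card f finj; rewrite !card_ord.
Qed.

End Simp.

Lemma ND_from_cols (R : realType) (d1 d2 : Order.disp_t) (P1 : finPOrderType d1)
  (P2 : finPOrderType d2) r n (G : 'I_r -> P1 -> R) (u : 'I_n -> P2 -> R)
  (Y : 'I_n -> P1 -> R) (M : P1 -> P2 -> R) :
  (forall i, order_cone (G i)) ->
  (forall c : 'I_n -> R, (forall j, 0 <= c j) -> order_cone (fun y => \sum_j c j * u j y)) ->
  (forall j, incone G (Y j)) -> (forall x y, M x y = \sum_j Y j x * u j y) ->
  ND_le r M.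
Proof.
move=> CG Cu hY hM; case/fin_all_exists: hY => c hc.
exists G, (fun i y => \sum_j c j i * u j y); split => //.
  by move=> i; apply: Cu => j; case: (hc j) => h _; exact: h.
move=> x y; rewrite hM.
transitivity (\sum_j \sum_i c j i * G i x * u j y).
  apply: eq_bigr => j _; case: (hc j) => _ ->; rewrite mulr_suml.
  by apply: eq_bigr.
rewrite exchange_big; apply: eq_bigr => i _; rewrite mulr_sumr; apply: eq_bigr => j _.
by rewrite mulrCA mulrA.
Qed.

Lemma numeric (F : realFieldType) (p N de eta : F) : 1 <= p -> 1 <= N ->
  de = (8 * p * N * (p + 2))^-1 -> 0 <= eta -> eta <= de ->
  N * (de * p + 2 * eta) <= (4 * p)^-1 * (1 - eta).
Proof.
move=> p1 N1 hde e0 ed.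
have p0 : 0 < p by lra.
have N0 : 0 < N by lra.
have D0 : 2 <= 8 * p * N * (p + 2).
  have pN : 1 <= p * N by rewrite -[1]mulr1 ler_pM //; lra.
  have : 1 <= p * N * (p + 2) by rewrite -[1]mulr1 ler_pM //; lra.
  rewrite -!mulrA; lra.
have de12 : de <= 2^-1.
  by rewrite hde lef_pV2 ?posrE //; lra.
apply: (@le_trans _ _ (N * (de * (p + 2)))).
  by apply: ler_wpM2l; lra.
have -> : N * (de * (p + 2)) = (4 * p)^-1 * 2^-1.
  rewrite hde; field; apply/and3P; split; lra.
by apply: ler_wpM2l; [rewrite invr_ge0; lra | lra].
Qed.

Lemma final_contra (F : realFieldType) (p L a b : F) : 1 <= p -> 0 < L ->
  L <= p * (a + b) -> a <= (4 * p)^-1 * L -> b <= (4 * p)^-1 * L -> False.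
Proof.
move=> p1 L0 h ha hb.
have p0 : 0 < p by lra.
have : p * (a + b) <= p * ((4 * p)^-1 * L + (4 * p)^-1 * L).
  by apply: ler_wpM2l; lra.
have -> : p * ((4 * p)^-1 * L + (4 * p)^-1 * L) = L / 2.
  by field; lra.
lra.
Qed.

Lemma ND_eq_le (R : realType) (d1 d2 : Order.disp_t) (P1 : finPOrderType d1)
  (P2 : finPOrderType d2) r (M : P1 -> P2 -> R) : ND_eq r M -> ND_le r M.
Proof. by case: r => [|s] //; case. Qed.

Lemma forward (R : realType) (d1 d2 : Order.disp_t)
    (P1 : finPOrderType d1) (P2 : finPOrderType d2) (q1 q2 r : nat) (M0 : P1 -> P2 -> R) e :
  num_extremal_rays (@order_cone R d1 P1) q1 ->
  num_extremal_rays (@order_cone R d2 P2) q2 ->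
  0 < e -> (forall M, (forall x y, `|M x y - M0 x y| < e) -> ND_eq r M) ->
  (minn #|P1| #|P2| <= r <= minn q1 q2)%N.
Proof.
move=> hq1 hq2 e0 hM.
have h0 : forall x y, `|M0 x y - M0 x y| < e by move=> x y; rewrite subrr normr0.
have hM0 := hM M0 h0.
apply/andP; split.
  rewrite leqNgt; apply/negP => hlt.
  have [M [hMe hrk]] := full_rank_near M0 e0.
  have := rank_le (ND_eq_le (hM M hMe)) => h.
  by have := leq_trans hrk h; rewrite leqNgt hlt.
rewrite leq_min; case: r hM hM0 => [|s] hM hM0; first by [].
case: hM0 => hle hnot.
apply/andP; split; rewrite leqNgt; apply/negP; rewrite ltnS => hq.
  by apply: hnot; apply: (ND_le_mono hq); exact: ND_le_q1 hq1 hle.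
apply: hnot; apply: (ND_le_mono hq).
exact: (ND_le_T (ND_le_q1 hq2 (ND_le_T hle))).
Qed.

Lemma mul_div_le (F : realFieldType) (K x c : F) : 0 <= K -> 0 <= x -> 1 <= c ->
  K * (x / (K + c)) <= x.
Proof.
move=> K0 x0 c1; have Kc : 0 < K + c by lra.
rewrite mulrA ler_pdivrMr // mulrDr (mulrC K x).
have : 0 <= x * c by rewrite mulr_ge0 //; lra.
lra.
Qed.

Lemma div_le (F : realFieldType) (K x c : F) : 0 <= K -> 0 <= x -> 1 <= c ->
  x / (K + c) <= x.
Proof.
move=> K0 x0 c1; have Kc : 0 < K + c by lra.
rewrite ler_pdivrMr // mulrDr.
have : 0 <= x * K by rewrite mulr_ge0.
have : x <= x * c by rewrite -{1}[x]mulr1 ler_wpM2l.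
lra.
Qed.

Lemma nat_req (a b r : nat) : (minn a b <= r)%N -> (r < a)%N -> (r <= b)%N -> r = b.
Proof. lia. Qed.

Lemma nat_N1 (a : nat) : (0 < a)%N -> (1 <= a + a * a)%N.
Proof. lia. Qed.

Lemma de_small (F : realFieldType) (p N : F) : 1 <= p -> 1 <= N ->
  (8 * p * N * (p + 2))^-1 <= 2^-1.
Proof.
move=> p1 N1.
have D0 : 2 <= 8 * p * N * (p + 2).
  have pN : 1 <= p * N by rewrite -[1]mulr1 ler_pM //; lra.
  have : 1 <= p * N * (p + 2) by rewrite -[1]mulr1 ler_pM //; lra.
  rewrite -!mulrA; lra.
by rewrite lef_pV2 ?posrE //; lra.
Qed.

Lemma backward (R : realType) (d1 d2 : Order.disp_t)
    (P1 : finPOrderType d1) (P2 : finPOrderType d2) (q1 q2 r : nat) :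
  num_extremal_rays (@order_cone R d1 P1) q1 ->
  num_extremal_rays (@order_cone R d2 P2) q2 ->
  simplicial (@order_cone R d2 P2) ->
  (minn #|P1| #|P2| <= r)%N -> (r <= q1)%N -> (r <= q2)%N ->
  typical_ND_rank R P1 P2 r.
Proof.
move=> hq1 hq2 hs hkr rq1 rq2.
have q2p2 := simp_q hs hq2.
have rp2 : (r <= #|P2|)%N := leq_trans rq2 q2p2.
case: r hkr rq1 rq2 rp2 => [|s] hkr rq1 rq2 rp2.
  exists (fun _ _ => 0), 1 => [|M _]; first exact: ltr01.
  exists (fun _ _ => 0), (fun _ _ => 0); split; try by move=> i; exact: C0.
  move=> x y; rewrite big_ord0.
  have : (0 < #|P1|)%N by apply/card_gt0P; exists x.
  have : (0 < #|P2|)%N by apply/card_gt0P; exists y.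
  move: hkr; rewrite leqn0 => /eqP hk h2 h1; exfalso; move: hk; lia.
set r := s.+1.
have [U [uU eU Uinj Uprin]] := SEL hq1 rq1.
have [u [uind uC]] := hs.
have [coef2 [K2 [K20 hrep2 hbd2]]] := coef_exists uind.
have [coefP [KP [KP0 hrepP hbdP]]] := coef_exists (@pv_indep R _ P1).
have Une i : exists x, x \in U i.
  have [_ [x hx] _] := eU i; exists x; case xU: (x \in U i) => //.
  by move: hx; rewrite ind_out ?xU ?eqxx.
have p1pos : (0 < #|P1|)%N.
  have [x _] := Une ord0; by apply/card_gt0P; exists x.
pose p : R := #|P1|%:R.
pose N : R := (#|P1| + #|P1| * #|P1|)%:R.
have p1 : 1 <= p by rewrite /p ler1n.
have N1 : 1 <= N by rewrite /N ler1n; exact: nat_N1.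
pose de : R := (8 * p * N * (p + 2))^-1.
have de0 : 0 < de by rewrite /de invr_gt0; apply: mulr_gt0; [apply: mulr_gt0; [apply: mulr_gt0|] | ]; lra.
have de12 : de <= 2^-1 := de_small p1 N1.
have de1 : de <= 1 by lra.
pose eta : R := de / (KP + 2).
have eta0 : 0 < eta by rewrite /eta divr_gt0 //; lra.
have etade : eta <= de by rewrite /eta div_le //; lra.
have KPeta : KP * eta <= de by rewrite /eta mul_div_le //; lra.
pose e : R := eta / (K2 + 1).
have e0 : 0 < e by rewrite /e divr_gt0 //; lra.
have K2e : K2 * e <= eta by rewrite /e mul_div_le //; lra.
pose sv (x : P1) := \sum_k pv R k x.
pose X (j : 'I_#|P2|) (x : P1) := if insub (val j) : option 'I_r is Some j' then
   ind R (U j') x + de * sv x else sv x.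
pose M0 (x : P1) (y : P2) := \sum_j X j x * u j y.
exists M0, e => // M hM.
pose Y (j : 'I_#|P2|) (x : P1) := coef2 (M x) j.
have hY : forall x y, M x y = \sum_j Y j x * u j y by move=> x y; exact: hrep2.
have hD : forall j x, `|Y j x - X j x| <= eta.
  move=> j x.
  have hu : forall y, \sum_j (Y j x - X j x) * u j y =
                     \sum_j coef2 (fun y => M x y - M0 x y) j * u j y.
    move=> y; rewrite -hrep2.
    rewrite (eq_bigr (fun j => Y j x * u j y - X j x * u j y)); last by move=> k _; rewrite mulrBl.
    by rewrite sumrB -hY.
  rewrite (coef_uniq uind hu j).
  apply: le_trans K2e; apply: hbd2 => y; exact: ltW (hM x y).
pose mu (j : 'I_#|P2|) := coefP (fun x => Y j x - X j x).
have hmu : forall j k, `|mu j k| <= de.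
  move=> j k; apply: le_trans KPeta; apply: hbdP => x; exact: hD.
pose cf (j : 'I_#|P2|) (k : 'I_#|P1|) :=
  (if insub (val j) : option 'I_r is Some _ then de else 1) + mu j k.
have cf0 : forall j k, 0 <= cf j k.
  move=> j k; have := hmu j k; rewrite /cf ler_norml => /andP [h _].
  case: insub => [_|]; lra.
have hYform : forall j x, Y j x =
   (if insub (val j) : option 'I_r is Some j' then ind R (U j') x else 0) +
   \sum_k cf j k * pv R k x.
  move=> j x; rewrite -[Y j x](subrK (X j x)) [in LHS](hrepP (fun x => Y j x - X j x)).
  rewrite /cf /mu /X /sv; case: insub => [j'|].
    rewrite addrC -addrA; congr (_ + _).
    rewrite mulr_sumr -big_split; apply: eq_bigr => k _; rewrite mulrDl; reflexivity.
  rewrite add0r -big_split; apply: eq_bigr => k _; rewrite mulrDl mul1r addrC; reflexivity.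
split.
  case: (leqP #|P1| r) => hp1r.
    apply: (@ND_from_cols _ _ _ _ _ r _ (fun i => ind R (U i)) u Y M).
    - by move=> i; exact: Cind (uU i).
    - by move=> c c0; apply/uC; exists c.
    - move=> j.
      have hpv : forall k, incone (fun i => ind R (U i)) (pv R k).
        move=> k; apply: (@incone_ray _ _ _ _ _ _ (widen_ord hp1r k) 1); first exact: ler01.
        by move=> x; rewrite mul1r (Uprin (widen_ord hp1r k) k erefl).
      have -> : Y j = (fun x => 1 * (if insub (val j) : option 'I_r is Some j' then ind R (U j') x else 0)
                        + \sum_k cf j k * pv R k x).
        by apply: functional_extensionality => x; rewrite mul1r hYform.
      apply: inconeS; first exact: ler01.
        exact: (incone_sum _ (cf0 j) hpv).
      case: insub => [j'|]; last exact: incone0.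
      by apply: (@incone_ray _ _ _ _ _ _ j' 1); [exact: ler01 | move=> x; rewrite mul1r].
    - exact: hY.
  have hr : r = #|P2| := nat_req hkr hp1r rp2.
  apply: (@ND_le_mono _ _ _ _ _ #|P2|); first by rewrite -hr.
  exists Y, u; split.
  - move=> j.
    have -> : Y j = (fun x => (if insub (val j) : option 'I_r is Some j' then ind R (U j') x else 0)
                        + \sum_k cf j k * pv R k x).
      by apply: functional_extensionality => x; rewrite hYform.
    apply: CD; first by case: insub => [j'|]; [exact: Cind (uU j') | exact: C0].
    apply: Csum => // k; exact: Cind (@upset_up _ P1 (enum_val k)).
  - move=> j; apply/uC; exists (fun i => if i == j then 1 else 0).
      by move=> i; case: (i == j).
    move=> y; rewrite (bigD1 j) //= eqxx mul1r big1 ?addr0 // => i /negbTE ->.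
    by rewrite mul0r.
  - exact: hY.
move=> [a [b [Ca Cb hab]]].
have : forall i, exists beta : 'I_#|P2| -> R,
    (forall j, 0 <= beta j) /\ forall y, b i y = \sum_j beta j * u j y.
  by move=> i; have [c c0 hc] := (uC (b i)).1 (Cb i); exists c.
case/fin_all_exists => beta hbeta.
have hYa : forall j x, Y j x = \sum_i beta i j * a i x.
  move=> j x.
  have hu : forall y, \sum_j Y j x * u j y = \sum_j (\sum_i beta i j * a i x) * u j y.
    move=> y; rewrite -hY hab.
    transitivity (\sum_i \sum_j beta i j * a i x * u j y).
      apply: eq_bigr => i _; case: (hbeta i) => _ ->; rewrite mulr_sumr.
      by apply: eq_bigr => j' _; rewrite mulrA (mulrC (a i x)).
    by rewrite exchange_big; apply: eq_bigr => j' _; rewrite mulr_suml.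
  exact: (coef_uniq uind hu j).
have Ya0 : forall j x, 0 <= Y j x.
  move=> j x; rewrite hYa; apply: sumr_ge0 => i _.
  by rewrite mulr_ge0 //; [case: (hbeta i) | case: (Ca i)].
have sv0 : forall x, 0 <= sv x <= p.
  move=> x; apply/andP; split; first by apply: sumr_ge0 => k _; exact: ind_ge0.
  apply: le_trans (_ : \sum_(k : 'I_#|P1|) (1 : R) <= _).
    by apply: ler_sum => k _; rewrite /pv /ind; case: (_ \in _).
  by rewrite sumr_const card_ord.
pose eps : R := (4 * p)^-1.
have hpick : forall j0 : 'I_r, exists i : 'I_s,
    0 < ell (a i) /\ phi (U j0) (a i) <= eps * ell (a i).
  move=> j0; pose jj := widen_ord rp2 j0.
  have hins : insub (val jj) = Some j0 by rewrite /= valK.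
  pose g x := de * sv x + (Y jj x - X jj x).
  have hYg : Y jj = (fun x => ind R (U j0) x + g x).
    apply: functional_extensionality => x; rewrite /g /X hins.
    by rewrite addrA addrC subrK.
  pose bb := de * p + 2 * eta.
  have dsv : forall x, 0 <= de * sv x <= de * p.
    move=> x; have /andP [h1 h2] := sv0 x.
    by apply/andP; split; [exact: mulr_ge0 (ltW de0) h1 | by rewrite ler_pM2l].
  have hg1 : forall x, `|g x| <= bb.
    move=> x; have := hD jj x; have := dsv x; rewrite /g /bb ler_norml => /andP [h1 h2] /andP [h3 h4].
    rewrite ler_norml; apply/andP; split; lra.
  have hg2 : forall x y, `|g y - g x| <= bb.
    move=> x y; have := hD jj x; have := hD jj y; have := dsv x; have := dsv y.
    rewrite /g /bb !ler_norml => /andP [h1 h2] /andP [h3 h4] /andP [h5 h6] /andP [h7 h8].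
    apply/andP; split; lra.
  have [x0 x0U] := Une j0.
  have bb0 : 0 <= bb by rewrite /bb; have := dsv x0; move=> /andP [h1 h2]; lra.
  have hphi : phi (U j0) (Y jj) <= N * bb by rewrite hYg; exact: phi_bound (uU j0) bb0 hg1 hg2.
  have hell : 1 - eta <= ell (Y jj).
    apply: le_trans (sum_ge_term' x0 (Ya0 jj)).
    rewrite hYg ind_in //; have := hD jj x0; have := dsv x0; rewrite /g ler_norml.
    move=> /andP [h1 h2] /andP [h3 h4]; lra.
  have hnum := numeric p1 N1 (erefl de) (ltW eta0) etade.
  have eYa : Y jj = (fun x => \sum_i beta i jj * a i x).
    by apply: functional_extensionality => x; rewrite hYa.
  have lphi : phi (U j0) (Y jj) = \sum_i beta i jj * phi (U j0) (a i).
    by rewrite eYa; apply: lin_sum; [exact: phi0 | exact: phi_lin].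
  have lell : ell (Y jj) = \sum_i beta i jj * ell (a i).
    by rewrite eYa; apply: lin_sum; [exact: ell0 | exact: ell_lin].
  have eps0 : 0 <= eps by rewrite /eps invr_ge0; lra.
  apply: (@pick_term _ _ (fun i => beta i jj) (fun i => phi (U j0) (a i)) (fun i => ell (a i)) eps).
  - by move=> i; case: (hbeta i).
  - by move=> i; exact: phi_ge0 (Ca i).
  - by move=> i; apply: sumr_ge0 => x _; case: (Ca i).
  - rewrite -lphi -lell; apply: le_trans hphi _; apply: le_trans hnum _.
    by apply: ler_wpM2l.
  - rewrite -lell; apply: lt_le_trans hell; lra.
have [F hF] := fin_all_exists hpick.
have [j0 [j1 [hne hF01]]] := pigeon F (ltnSn s).
case: (hF j0) => L0 hA0; case: (hF j1) => _ hA1; rewrite -hF01 in hA1.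
apply: (final_contra p1 L0 _ hA0 hA1).
apply: (KI (uU j0) (uU j1) (eU j0) (eU j1) _ (Ca (F j0))).
by apply: contra hne => /eqP /Uinj ->.
Qed.

Unset Implicit Arguments. Set Strict Implicit.

Theorem corollary1 (R : realType) (d1 d2 : Order.disp_t)
    (P1 : finPOrderType d1) (P2 : finPOrderType d2) (q1 q2 r : nat) :
  num_extremal_rays (@order_cone R d1 P1) q1 ->
  num_extremal_rays (@order_cone R d2 P2) q2 ->
  simplicial (@order_cone R d2 P2) ->
  (typical_ND_rank R P1 P2 r <->
   (minn #|P1| #|P2| <= r <= minn q1 q2)%N).
Proof.
move=> hq1 hq2 hs; split.
  by move=> [M0 [e e0 hM]]; exact: (forward hq1 hq2 e0 hM).
move=> /andP [hkr]; rewrite leq_min => /andP [rq1 rq2].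
exact: backward hq1 hq2 hs hkr rq1 rq2.
Qed.
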